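(* For every integer $k\ge 2$, $\mathsf{{Mod_k}_{tot}P}=\mathsf{Mod_kP}$.
   Context: An NPTM is a non-deterministic polynomial-time Turing machine. For an NPTM $M$ and input $x$, $acc_M(x)$ is the number of accepting paths of $M$ on $x$ and $tot_M(x)$ is the number of all computation paths of $M$ on $x$ minus $1$. $\#\mathsf{P}=\{acc_M\}$, $\mathsf{TotP}=\{tot_M\}$ over all NPTMs $M$. $\mathsf{Mod_kP}$ is the class of languages $L$ for which there is $f\in\#\mathsf{P}$ such that $x\in L\iff f(x)\not\equiv 0\pmod{k}$. $\mathsf{{Mod_k}_{tot}P}$ is defined identically with $f\in\mathsf{TotP}$. *)

(* Defs.v *)
From mathcomp Require Import all_boot.
Set Implicit Arguments. Unset Strict Implicit. Unset Printing Implicit Defensive.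

Inductive move := MLeft | MRight | MStay.

(* A non-deterministic single-tape Turing machine with finitely many states
   ('I_(nQ.+1)) and finitely many tape symbols ('I_(nS.+3)); symbol 0 is the
   blank, symbols 1 and 2 encode the input bits false / true.  [delta q a] is
   the list of possible moves (each entry is one non-deterministic branch).
   A configuration with no possible move is halting; it is accepting iff its
   state is [qacc]. *)
Record NTM := {
  nQ : nat;
  nS : nat;
  delta : 'I_nQ.+1 -> 'I_nS.+3 -> seq ('I_nQ.+1 * 'I_nS.+3 * move);
  qstart : 'I_nQ.+1;
  qacc : 'I_nQ.+1 }.

Section Semantics.
Variable M : NTM.

Definition state := 'I_(nQ M).+1.
Definition symb := 'I_(nS M).+3.
(* state, left part (nearest cell first), scanned symbol, right part *)
Definition config := (state * seq symb * symb * seq symb)%type.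

Definition blank : symb := ord0.
Definition bit_sym (b : bool) : symb := inord (1 + b).

Definition apply_move (q' : state) (b : symb) (m : move)
  (l : seq symb) (r : seq symb) : config :=
  match m with
  | MLeft => match l with
             | [::] => (q', [::], blank, b :: r)
             | h :: l' => (q', l', h, b :: r)
             end
  | MRight => match r with
              | [::] => (q', b :: l, blank, [::])
              | h :: r' => (q', b :: l, h, r')
              end
  | MStay => (q', l, b, r)
  end.

Definition step (c : config) : seq config :=
  let '(q, l, a, r) := c in
  map (fun t => let '(q', b, m) := t in apply_move q' b m l r) (@delta M q a).

Definition init (x : seq bool) : config :=
  match x with
  | [::] => (@qstart M, [::], blank, [::])
  | b :: x' => (@qstart M, [::], bit_sym b, map bit_sym x')
  end.

Definition is_acc (c : config) : bool := let '(q, _, _, _) := c in q == @qacc M.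

Fixpoint halts_within (fuel : nat) (c : config) : bool :=
  match step c with
  | [::] => true
  | cs => match fuel with
          | 0 => false
          | f.+1 => all (halts_within f) cs
          end
  end.

Fixpoint count_paths (onlyacc : bool) (fuel : nat) (c : config) : nat :=
  match step c with
  | [::] => if onlyacc then is_acc c : nat else 1
  | cs => match fuel with
          | 0 => 0
          | f.+1 => sumn (map (count_paths onlyacc f) cs)
          end
  end.

End Semantics.

Definition poly_bound (c n : nat) : nat := c * n ^ c + c.

Definition polytime (M : NTM) (c : nat) : Prop :=
  forall x : seq bool, halts_within (poly_bound c (size x)) (init M x).

Definition acc_M (M : NTM) (c : nat) (x : seq bool) : nat :=
  count_paths true (poly_bound c (size x)) (init M x).
Definition tot_M (M : NTM) (c : nat) (x : seq bool) : nat :=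
  (count_paths false (poly_bound c (size x)) (init M x)).-1.

Definition SharpP (f : seq bool -> nat) : Prop :=
  exists (M : NTM) (c : nat), polytime M c /\ forall x, f x = acc_M M c x.

Definition TotP (f : seq bool -> nat) : Prop :=
  exists (M : NTM) (c : nat), polytime M c /\ forall x, f x = tot_M M c x.

Definition language := seq bool -> Prop.

Definition ModkP (k : nat) (L : language) : Prop :=
  exists f, SharpP f /\ forall x, L x <-> f x %% k != 0.

Definition ModktotP (k : nat) (L : language) : Prop :=
  exists f, TotP f /\ forall x, L x <-> f x %% k != 0.

(* Main.v *)
Require Import Defs.
From mathcomp Require Import all_boot.
From mathcomp Require Import zify.
Set Implicit Arguments. Unset Strict Implicit. Unset Printing Implicit Defensive.

Section Gen.
Variable M : NTM.

Fixpoint gen (v : config M -> nat) (f : nat) (c : config M) : nat :=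
  match step c with
  | [::] => v c
  | cs => match f with 0 => 0 | f'.+1 => sumn (map (gen v f') cs) end
  end.

Lemma genE v f (c : config M) : gen v f c = match step c with
  | [::] => v c
  | cs => match f with 0 => 0 | f'.+1 => sumn (map (gen v f') cs) end
  end.
Proof. by case: f. Qed.

Lemma cpE b f (c : config M) : count_paths b f c = match step c with
  | [::] => if b then is_acc c : nat else 1
  | cs => match f with 0 => 0 | f'.+1 => sumn (map (count_paths b f') cs) end
  end.
Proof. by case: f. Qed.

Lemma haltsE f (c : config M) : halts_within f c = match step c with
  | [::] => true
  | cs => match f with 0 => false | f'.+1 => all (halts_within f') cs end
  end.
Proof. by case: f. Qed.

Lemma cp_gen b f (c : config M) : count_paths b f c = gen (fun c => if b then is_acc c : nat else 1) f c.
Proof.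
elim: f c => [|f IH] c; rewrite cpE genE; case: (step c) => // x s.
by congr sumn; apply: eq_map.
Qed.

Lemma sumn_map_mod k (T : Type) (s : seq T) (f g : T -> nat) :
  (forall x, f x = g x %[mod k]) -> sumn (map f s) = sumn (map g s) %[mod k].
Proof.
move=> H; elim: s => //= x s IH.
by rewrite -modnDm IH H modnDm.
Qed.

Lemma gen_mod k v1 v2 f (c : config M) : (forall c, v1 c = v2 c %[mod k]) ->
  gen v1 f c = gen v2 f c %[mod k].
Proof.
move=> H; elim: f c => [|f IH] c; rewrite !genE; case: (step c) => // x s.
by apply: sumn_map_mod.
Qed.

Lemma cp_pos f (c : config M) : halts_within f c -> 0 < count_paths false f c.
Proof.
elim: f c => [|f IH] c; rewrite haltsE cpE; case: (step c) => // x s.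
move=> /andP [hx _] /=; have := IH x hx; lia.
Qed.

End Gen.

Lemma lQ Q : Q.+1 <= Q.+3. Proof. exact: leqW (leqW (leqnn _)). Qed.

Section Ext.
Variables (M : NTM) (m w : nat).

Definition finq : 'I_(nQ M).+3 := ord_max.
Definition s0 : 'I_(nQ M).+3 := Ordinal (leqnSn (nQ M).+2).
Definition liftq (q : 'I_(nQ M).+1) : 'I_(nQ M).+3 := widen_ord (lQ (nQ M)) q.
Definition wt (q : 'I_(nQ M).+1) := if q == @qacc M then 1 else w.

Definition ext_delta (q : 'I_(nQ M).+3) (a : 'I_(nS M).+3) :
  seq ('I_(nQ M).+3 * 'I_(nS M).+3 * move) :=
  if q < (nQ M).+1 then
    let q0 : 'I_(nQ M).+1 := inord q in
    if @delta M q0 a is [::] then nseq (wt q0) (finq, a, MStay)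
    else map (fun t => let '(q', b, mv) := t in (liftq q', b, mv)) (@delta M q0 a)
  else if q == s0 then (liftq (@qstart M), a, MStay) :: nseq m (finq, a, MStay)
  else [::].

Definition ext : NTM :=
  {| nQ := (nQ M).+2; nS := nS M; delta := ext_delta; qstart := s0; qacc := finq |}.

Definition liftc (c : config M) : config ext :=
  let '(q, l, a, r) := c in (liftq q, l, a, r).

Definition vM (c : config M) : nat := let '(q, _, _, _) := c in wt q.

Lemma step_fin l a r : step (M := ext) (finq, l, a, r) = [::].
Proof.
rewrite /step /= /ext_delta /=.
by rewrite ltnNge leqnSn /= -(inj_eq val_inj) /= eqn_leq ltnn.
Qed.

Lemma step_lift c : step (liftc c) =
  if step c is [::] then nseq (vM c) (let '(q, l, a, r) := c in (finq, l, a, r))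
  else map liftc (step c).
Proof.
case: c => [[[q l] a] r].
rewrite /step /= /ext_delta /= ltn_ord.
have -> : (inord (liftq q) : 'I_(nQ M).+1) = q by apply: val_inj; rewrite /= inordK.
case: (@delta M q a) => [|t s] /=; first by rewrite map_nseq.
rewrite -map_comp; congr (_ :: _); first by case: t => [[q' b] []] //= ; case: l; case: r.
rewrite -map_comp; apply: eq_map => [[[q2 b2] []]] /=; by [case: l | case: r].
Qed.

Hypothesis w_pos : 0 < w.

Lemma leaf b g (c : config M) : step c = [::] ->
  count_paths b g.+1 (liftc c) = vM c /\ halts_within g.+1 (liftc c).
Proof.
move=> E; rewrite cpE haltsE step_lift E.
have : 0 < vM c by case: c {E} => [[[q l] a] r] /=; rewrite /wt; case: ifP.
case: (vM c) => // n _.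
case: c {E} => [[[q l] a] r] /=.
rewrite map_nseq sumn_nseq cpE haltsE step_fin /= /is_acc eqxx /=.
split; first by case: b; rewrite mul1n add1n.
by rewrite all_nseq haltsE step_fin orbT.
Qed.

Lemma sim b f (c : config M) g : halts_within f c -> f < g ->
  count_paths b g (liftc c) = gen vM f c /\ halts_within g (liftc c).
Proof.
elim: f c g => [|f IH] c g.
  rewrite haltsE genE; case E: (step c) => // _.
  by case: g => // g _; apply: leaf.
rewrite haltsE genE; case E: (step c) => [|x s].
  by move=> _; case: g => // g _; apply: leaf.
case: g => // g /allP Hall; rewrite ltnS => Hfg.
rewrite cpE haltsE step_lift E /= -map_comp; split.
  congr (sumn (_ :: _)); first by case: (IH x g (Hall x (mem_head _ _)) Hfg).
  apply/eq_in_map => y ys /=.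
  by case: (IH y g (Hall y ltac:(by rewrite inE ys orbT)) Hfg).
apply/andP; split; first by case: (IH x g (Hall x (mem_head _ _)) Hfg).
apply/allP => y /mapP [z zs ->].
by case: (IH z g (Hall z ltac:(by rewrite inE zs orbT)) Hfg).
Qed.

Lemma step_init x : step (init ext x) =
  liftc (init M x) :: nseq m (let '(_, l, a, r) := init M x in (finq, l, a, r)).
Proof.
case: x => [|bb x]; rewrite /step /= /ext_delta /= ltnn eqxx /=;
by rewrite map_nseq.
Qed.

Lemma ext_main b F G x : halts_within F (init M x) -> F.+1 < G ->
  count_paths b G (init ext x) = gen vM F (init M x) + m /\
  halts_within G (init ext x).
Proof.
case: G => // G H HFG; rewrite cpE haltsE step_init /=.
have [h1 h2] := sim b H HFG.
rewrite h1 h2 /=; clear h1 h2; move: (init M x) => c.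
case: c => [[[q l] a] r] /=.
rewrite map_nseq sumn_nseq all_nseq haltsE step_fin orbT cpE step_fin /is_acc /= eqxx.
by split => //; case: b; rewrite mul1n.
Qed.

End Ext.

Lemma pb c n : (poly_bound c n).+1 < poly_bound c.+2 n.
Proof.
rewrite /poly_bound.
suff : c * n ^ c <= c.+2 * n ^ c.+2 by lia.
case: n => [|n].
  by case: c => [|c]; rewrite ?mul0n // !exp0n // !muln0.
apply: leq_mul; first by lia.
by apply: leq_pexp2l => //; lia.
Qed.

Theorem proposition10 (k : nat) : 2 <= k ->
  forall L : language, ModktotP k L <-> ModkP k L.
Proof.
move=> k2 L; split.
- case=> f [[M [c [Hp Hf]]] HL].
  pose M' := ext M k.-1 1.
  exists (acc_M M' c.+2); split.
    exists M', c.+2; split => // x.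
    exact: (@ext_main M k.-1 1 isT true _ _ x (Hp x) (pb c _)).2.
  move=> x; rewrite HL Hf /acc_M /tot_M.
  rewrite (@ext_main M k.-1 1 isT true _ _ x (Hp x) (pb c _)).1.
  have -> : gen (@vM M 1) (poly_bound c (size x)) (init M x) =
            count_paths false (poly_bound c (size x)) (init M x).
    rewrite cp_gen -(modn0 (gen _ _ _)) -(modn0 (gen (fun _ => _) _ _)).
    apply: gen_mod => -[[[q l] a] r] /=; rewrite /wt; by case: ifP.
  have := cp_pos (Hp x).
  case: (count_paths false _ _) => // N _ /=.
  by rewrite addSnnS prednK ?modnDr //; lia.
- case=> f [[M [c [Hp Hf]]] HL].
  pose M' := ext M 1 k.
  exists (tot_M M' c.+2); split.
    exists M', c.+2; split => // x.
    exact: (@ext_main M 1 k (ltnW k2) false _ _ x (Hp x) (pb c _)).2.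
  move=> x; rewrite HL Hf /acc_M /tot_M.
  rewrite (@ext_main M 1 k (ltnW k2) false _ _ x (Hp x) (pb c _)).1 addn1 /=.
  rewrite cp_gen.
  have -> : gen (@vM M k) (poly_bound c (size x)) (init M x) %% k =
            gen (fun c => if true then is_acc c : nat else 1) (poly_bound c (size x)) (init M x) %% k.
    apply: gen_mod => -[[[q l] a] r] /=; rewrite /wt /is_acc; case: ifP => //= _.
    by rewrite modnn mod0n.
  by [].
Qed.
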